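(* A map $f:\mathbb{X}\to\mathbb{Y}$ in $p\mathsf{Ch}^*_\mathbb{Q}$ has the right lifting property with respect to every map in $\mathbb{J}_0$ if and only if, for every $0\le s\le t<\infty$, the induced map $\mathbb{X}(s)\to\mathbb{X}(t)\times_{\mathbb{Y}(t)}\mathbb{Y}(s)$ is an epimorphism (degreewise surjective).
   Context: $p\mathsf{Ch}^*_\mathbb{Q}=\mathsf{Fun}([0,\infty),\mathsf{Ch}^*_\mathbb{Q})$, non-negatively graded rational cochain complexes with differential raising degree. For $k\ge1$, $D^k$ is the complex with $\mathbb{Q}$ in degrees $k-1$ and $k$ and identity differential; $D^0=0$. $\mathbb{D}^k_s$ is the persistent complex that is $0$ at $r<s$ and $D^k$ at $r\ge s$, with identity structure maps. $\mathbb{J}_0=\{\mathbb{D}^k_t\hookrightarrow\mathbb{D}^k_s : k\in\mathbb{N},\ 0\le s<t<\infty\}$ (the evident inclusions). The map $\mathbb{X}(s)\to\mathbb{X}(t)\times_{\mathbb{Y}(t)}\mathbb{Y}(s)$ is induced by the structure map $\mathbb{X}(s\le t)$ and $f(s)$. *)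

(* Defs.v *)
From Stdlib Require Import Reals.
From HB Require Import structures.
From mathcomp Require Import all_boot all_order all_algebra.

Set Implicit Arguments.
Unset Strict Implicit.
Unset Printing Implicit Defensive.
Import GRing.Theory.

(* Raw data of a persistent non-negatively graded rational cochain complex:
   pobj r n = X(r)^n, pdif r n : X(r)^n -> X(r)^(n+1),
   pstr r r' n = X(r <= r') in degree n.  Only values with 0 <= r (<= r')
   matter; everything else is junk and never constrained nor used. *)
Record pch := Pch {
  pobj : R -> nat -> lmodType rat;
  pdif : forall r n, pobj r n -> pobj r n.+1;
  pstr : forall r r' n, pobj r n -> pobj r' n }.

Definition is_linear (U V : lmodType rat) (g : U -> V) : Prop :=
  forall (a : rat) (x y : U), g (a *: x + y)%R = (a *: g x + g y)%R.

Definition is_pch (X : pch) : Prop :=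
  (forall r n, (Rle R0 r) -> is_linear (@pdif X r n)) /\
  (forall r n x, (Rle R0 r) -> @pdif X r n.+1 (@pdif X r n x) = 0%R) /\
  (forall r r' n, (Rle R0 r) -> (Rle r r') -> is_linear (@pstr X r r' n)) /\
  (forall r r' n x, (Rle R0 r) -> (Rle r r') ->
      @pstr X r r' n.+1 (@pdif X r n x) = @pdif X r' n (@pstr X r r' n x)) /\
  (forall r n x, (Rle R0 r) -> @pstr X r r n x = x) /\
  (forall r r' r'' n x, (Rle R0 r) -> (Rle r r') -> (Rle r' r'') ->
      @pstr X r' r'' n (@pstr X r r' n x) = @pstr X r r'' n x).

Definition phom (X Y : pch) := forall r n, pobj X r n -> pobj Y r n.

Definition is_phom (X Y : pch) (f : phom X Y) : Prop :=
  (forall r n, (Rle R0 r) -> is_linear (f r n)) /\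
  (forall r n x, (Rle R0 r) -> f r n.+1 (@pdif X r n x) = @pdif Y r n (f r n x)) /\
  (forall r r' n x, (Rle R0 r) -> (Rle r r') ->
      f r' n (@pstr X r r' n x) = @pstr Y r r' n (f r n x)).

Definition pcomp (X Y Z : pch) (g : phom Y Z) (f : phom X Y) : phom X Z :=
  fun r n x => g r n (f r n x).

Definition pheq (X Y : pch) (f g : phom X Y) : Prop :=
  forall r n x, (Rle R0 r) -> f r n x = g r n x.

Definition dimD (k : nat) (s r : R) (n : nat) : nat :=
  if Rle_dec s r then (if (0 < k)%N && ((n == k.-1) || (n == k)) then 1 else 0)
  else 0.

(* the canonical map Q^a -> Q^b for a, b in {0,1}: identity if a = b = 1,
   zero otherwise *)
Definition pad (a b : nat) (u : 'rV[rat]_a) : 'rV[rat]_b :=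
  \row_(j < b) (if insub (val j) is Some i then u ord0 i else 0%R).

Definition diskD (k : nat) (s : R) : pch :=
  @Pch (fun r n => 'rV[rat]_(dimD k s r n))
       (fun r n => @pad (dimD k s r n) (dimD k s r n.+1))
       (fun r r' n => @pad (dimD k s r n) (dimD k s r' n)).

(* the inclusion D^k_t -> D^k_s for s < t *)
Definition diskIncl (k : nat) (t s : R) : phom (diskD k t) (diskD k s) :=
  fun r n => @pad (dimD k t r n) (dimD k s r n).

Definition RLP (A B X Y : pch) (j : phom A B) (f : phom X Y) : Prop :=
  forall (a : phom A X) (b : phom B Y),
    is_phom a -> is_phom b -> pheq (pcomp f a) (pcomp b j) ->
    exists h : phom B X, is_phom h /\ pheq (pcomp h j) a /\ pheq (pcomp f h) b.

(* Main.v *)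
Require Import Defs.
From Stdlib Require Import Reals.
From mathcomp Require Import all_boot all_order all_algebra.
From mathcomp Require Import zify.
Set Implicit Arguments.
Unset Strict Implicit.
Unset Printing Implicit Defensive.
Import GRing.Theory.
Local Open Scope ring_scope.

Section Lin.
Variables (U V : lmodType rat) (g : U -> V).
Hypothesis H : is_linear g.
Lemma lin0 : g 0 = 0.
Proof. have := H (-1) 0 0. by rewrite scaler0 addr0 scaleN1r addNr. Qed.
Lemma linZ a x : g (a *: x) = a *: g x.
Proof. have := H a x 0. by rewrite !addr0 lin0 addr0. Qed.
Lemma linD x y : g (x + y) = g x + g y.
Proof. have := H 1 x y. by rewrite !scale1r. Qed.
End Lin.

Definition coef d (u : 'rV[rat]_d) : rat := \sum_(j < d) u ord0 j.
Definition ones d : 'rV[rat]_d := const_mx 1.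

Lemma coefL d a (u v : 'rV[rat]_d) : coef (a *: u + v) = a * coef u + coef v.
Proof.
rewrite /coef mulr_sumr -big_split /=; apply: eq_bigr => j _; by rewrite !mxE.
Qed.

Lemma coef_d0 d (u : 'rV[rat]_d) : d = 0%N -> coef u = 0.
Proof. by move=> E; subst; rewrite /coef big_ord0. Qed.

Lemma rv_d0 d (u : 'rV[rat]_d) : d = 0%N -> u = 0.
Proof. by move=> E; subst; apply/rowP => -[]. Qed.

Lemma rv_dec d (u : 'rV[rat]_d) : (d <= 1)%N -> u = coef u *: ones d.
Proof.
case: d u => [|[|//]] u _; first by apply/rowP => -[].
apply/rowP => j; rewrite !mxE /coef big_ord1 (ord1 j) mulr1 //.
Qed.

Lemma pad_id a (u : 'rV[rat]_a) : @pad a a u = u.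
Proof.
apply/rowP => j; rewrite mxE; case: insubP => [i _ Ei|].
  by move/val_inj: Ei => ->.
by rewrite ltn_ord.
Qed.

Lemma coef_pad_eq a b (u : 'rV[rat]_a) : a = b -> coef (@pad a b u) = coef u.
Proof. by move=> E; subst; rewrite pad_id. Qed.

Lemma pad_ones a b : a = b -> @pad a b (ones a) = ones b.
Proof. by move=> E; subst; rewrite pad_id. Qed.

Lemma coef_pad0 a b (u : 'rV[rat]_a) : a = 0%N -> coef (@pad a b u) = 0.
Proof.
move=> E; subst; rewrite /coef big1 // => j _; rewrite mxE.
by case: insubP => // -[].
Qed.

Lemma coef_ones1 d : d = 1%N -> coef (ones d) = 1.
Proof. by move=> E; subst; rewrite /coef big_ord1 mxE. Qed.

Lemma dimD_le1 k s r m : (dimD k s r m <= 1)%N.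
Proof. rewrite /dimD; destruct (Rle_dec s r) => //; by case: ifP. Qed.

Lemma dimD_lt k s r m : Rlt r s -> dimD k s r m = 0%N.
Proof. move=> H; rewrite /dimD; destruct (Rle_dec s r) as [h|h]; [exfalso; exact (Rlt_not_le _ _ H h)|reflexivity]. Qed.

Lemma dimD_eq k s t r m : Rle s r -> Rle t r -> dimD k s r m = dimD k t r m.
Proof. move=> H1 H2; rewrite /dimD; by destruct (Rle_dec s r); destruct (Rle_dec t r). Qed.

Lemma dimD_n n s r : Rle s r -> dimD n.+1 s r n = 1%N.
Proof. move=> H; rewrite /dimD; destruct (Rle_dec s r) => //=; by rewrite eqxx. Qed.

Lemma dimD_Sn n s r : Rle s r -> dimD n.+1 s r n.+1 = 1%N.
Proof. move=> H; rewrite /dimD; destruct (Rle_dec s r) => //=; by rewrite eqxx orbT. Qed.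

Lemma dimD_cases n s r m : dimD n.+1 s r m <> 0%N -> m = n \/ m = n.+1.
Proof.
rewrite /dimD; destruct (Rle_dec s r) => //=.
by case: eqP => [->|_]; [left|case: eqP => [->|_]; [right|]].
Qed.

Lemma dimD_le k s r m : dimD k s r m <> 0%N -> Rle s r.
Proof. rewrite /dimD; by destruct (Rle_dec s r). Qed.

Lemma dimD0 s r m : dimD 0 s r m = 0%N.
Proof. rewrite /dimD; by destruct (Rle_dec s r). Qed.

Lemma dimD_SSn n s r : dimD n.+1 s r n.+2 = 0%N.
Proof.
rewrite /dimD; destruct (Rle_dec s r) => //=.
have -> : (n.+2 == n) = false by apply/eqP; lia.
have -> : (n.+2 == n.+1) = false by apply/eqP; lia.
by [].
Qed.

Lemma dimD_eq2 k s r r' m : Rle s r -> Rle s r' -> dimD k s r m = dimD k s r' m.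
Proof. move=> H1 H2; rewrite /dimD; by destruct (Rle_dec s r); destruct (Rle_dec s r'). Qed.

Definition castz (P : nat -> lmodType rat) (n : nat) (z : P n) (m : nat) : P m :=
  match Nat.eq_dec n m with left e => eq_rect n P z m e | right _ => 0 end.

Lemma castz_id (P : nat -> lmodType rat) n (z : P n) : castz z n = z.
Proof.
rewrite /castz; case: (Nat.eq_dec n n) => [e|//].
by rewrite (eq_axiomK e).
Qed.

Lemma castz_ne (P : nat -> lmodType rat) n (z : P n) m : n <> m -> castz z m = 0.
Proof. by rewrite /castz; case: (Nat.eq_dec n m). Qed.

Lemma castz_map (P Q : nat -> lmodType rat) (phi : forall m, P m -> Q m) n (z : P n) m :
  (forall m, phi m 0 = 0) -> phi m (castz z m) = castz (phi n z) m.
Proof.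
move=> H0; rewrite /castz; case: (Nat.eq_dec n m) => [e|_]; last exact: H0.
by case: m / e.
Qed.

Definition gw (Z : pch) (s : R) (n : nat) (z : pobj Z s n) (m : nat) : pobj Z s m :=
  match m with
  | 0 => @castz (pobj Z s) n z 0
  | m'.+1 => @pdif Z s m' (@castz (pobj Z s) n z m') + @castz (pobj Z s) n z m'.+1
  end.

Section PchFacts.
Variable Z : pch.
Hypothesis HZ : is_pch Z.

Lemma dlin r n : Rle R0 r -> is_linear (@pdif Z r n).
Proof. by case: HZ => H _ ; apply: H. Qed.
Lemma dd r n x : Rle R0 r -> @pdif Z r n.+1 (@pdif Z r n x) = 0.
Proof. by case: HZ => _ [H _]; apply: H. Qed.
Lemma slin r r' n : Rle R0 r -> Rle r r' -> is_linear (@pstr Z r r' n).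
Proof. by case: HZ => _ [_ [H _]]; apply: H. Qed.
Lemma sd r r' n x : Rle R0 r -> Rle r r' ->
      @pstr Z r r' n.+1 (@pdif Z r n x) = @pdif Z r' n (@pstr Z r r' n x).
Proof. by case: HZ => _ [_ [_ [H _]]]; apply: H. Qed.
Lemma sid r n x : Rle R0 r -> @pstr Z r r n x = x.
Proof. by case: HZ => _ [_ [_ [_ [H _]]]]; apply: H. Qed.
Lemma scomp r r' r'' n x : Rle R0 r -> Rle r r' -> Rle r' r'' ->
      @pstr Z r' r'' n (@pstr Z r r' n x) = @pstr Z r r'' n x.
Proof. by case: HZ => _ [_ [_ [_ [_ H]]]]; apply: H. Qed.

Lemma gw_n s n (z : pobj Z s n) : Rle R0 s -> gw z n = z.
Proof.
move=> hs; case: n z => [|p] z /=; first exact: castz_id.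
rewrite castz_id castz_ne; last by lia.
by rewrite (lin0 (@dlin s p hs)) add0r.
Qed.

Lemma gw_Sn s n (z : pobj Z s n) : gw z n.+1 = @pdif Z s n z.
Proof. by rewrite /= castz_id castz_ne ?addr0 //; lia. Qed.
End PchFacts.

Lemma gw_map (Z W : pch) s s' (phi : forall m, pobj Z s m -> pobj W s' m) n (z : pobj Z s n) m :
  (forall m x y, phi m (x + y) = phi m x + phi m y) -> (forall m, phi m 0 = 0) ->
  (forall m x, phi m.+1 (@pdif Z s m x) = @pdif W s' m (phi m x)) ->
  phi m (gw z m) = gw (phi n z) m.
Proof.
move=> HD H0 Hd; case: m => [|m] /=; first exact: castz_map.
by rewrite HD Hd !(castz_map _ _ H0).
Qed.

Definition gen (Z : pch) (k : nat) (s : R) (n : nat) (z : pobj Z s n) : phom (diskD k s) Z :=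
  fun r m u => if Rle_dec s r then coef (u : 'rV_(dimD k s r m)) *: @pstr Z s r m (gw z m) else 0.

Lemma gen_phom (Z : pch) s n (z : pobj Z s n) :
  is_pch Z -> Rle R0 s -> is_phom (@gen Z n.+1 s n z).
Proof.
move=> HZ hs; split; [|split].
- move=> r m hr a u v; rewrite /gen; destruct (Rle_dec s r) as [h|h].
    by rewrite coefL scalerDl scalerA.
  by rewrite scaler0 addr0.
- move=> r m u hr; rewrite /gen; destruct (Rle_dec s r) as [h|h]; last first.
    by rewrite (lin0 (dlin HZ hr)).
  case: (dimD n.+1 s r m =P 0%N) => [E|NE].
    by rewrite (coef_d0 u E) (coef_pad0 _ _ E) !scale0r (lin0 (dlin HZ hr)).
  case/dimD_cases: NE => E; subst m.
    rewrite (coef_pad_eq _ (etrans (dimD_n _ h) (esym (dimD_Sn _ h)))).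
    by rewrite (linZ (dlin HZ hr)) -(sd HZ _ hs h) gw_Sn (gw_n HZ _ hs).

  rewrite (coef_d0 _ (dimD_SSn _ _ _)) scale0r.
  rewrite (linZ (dlin HZ hr)) -(sd HZ _ hs h) gw_Sn (dd HZ _ hs).
  by rewrite (lin0 (slin HZ hs h)) scaler0.
- move=> r r' m u hr hrr'; rewrite /gen; destruct (Rle_dec s r) as [h|h].
    have h' := Rle_trans _ _ _ h hrr'.
    destruct (Rle_dec s r') as [h1|h0]; last by case: h0.
    rewrite (coef_pad_eq _ (dimD_eq2 _ _ h h')).
    by rewrite (linZ (slin HZ hr hrr')) (scomp HZ _ hs h hrr').
  rewrite (lin0 (slin HZ hr hrr')).
  destruct (Rle_dec s r') as [h1|h0]; last by [].
  have hl : Rlt r s by apply: Rnot_le_lt.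
  by rewrite (coef_pad0 _ _ (dimD_lt _ _ hl)) scale0r.
Qed.

Lemma gen_uniq (Z : pch) s n (p : phom (diskD n.+1 s) Z) :
  is_pch Z -> Rle R0 s -> is_phom p ->
  pheq p (@gen Z n.+1 s n (p s n (ones _))).
Proof.
move=> HZ hs [pl [pd pn]] r m u hr; rewrite /gen.
destruct (Rle_dec s r) as [h|h]; last first.
  have hl : Rlt r s by apply: Rnot_le_lt.
  by rewrite (rv_d0 u (dimD_lt _ _ hl)) (lin0 (pl r m hr)).
rewrite {1}(rv_dec u (dimD_le1 _ _ _ _)) (linZ (pl r m hr)).
case: (dimD n.+1 s r m =P 0%N) => [E|NE].
  by rewrite (coef_d0 u E) !scale0r.
congr (_ *: _).
rewrite -(pad_ones (dimD_eq2 n.+1 m (Rle_refl s) h)).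
rewrite (pn s r m _ hs h); congr (@pstr Z s r m _).
case/dimD_cases: NE => E; subst m; first by rewrite (gw_n HZ _ hs).
rewrite gw_Sn -(pd s n _ hs); congr (p s n.+1 _).
symmetry; have E : dimD n.+1 s s n = dimD n.+1 s s n.+1 by rewrite (dimD_n _ (Rle_refl s)) (dimD_Sn _ (Rle_refl s)).
exact: (pad_ones E).
Qed.

Lemma gen_restr (Z : pch) k s t n (z : pobj Z s n) :
  is_pch Z -> Rle R0 s -> Rle s t -> forall r m u, Rle R0 r ->
  @gen Z k s n z r m (@diskIncl k t s r m u) = @gen Z k t n (@pstr Z s t n z) r m u.
Proof.
move=> HZ hs hst r m u hr; rewrite /gen /diskIncl.
destruct (Rle_dec t r) as [ht|ht].
  have hsr := Rle_trans s t r hst ht.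
  destruct (Rle_dec s r) as [h1|h0]; last by case: h0.
  rewrite (coef_pad_eq _ (dimD_eq _ _ ht hsr)); congr (_ *: _).
  rewrite -(scomp HZ _ hs hst ht); congr (@pstr Z t r m _).
  apply: (gw_map (phi := fun m => @pstr Z s t m)).
  - by move=> m' x y; rewrite (linD (slin HZ hs hst)).
  - by move=> m'; rewrite (lin0 (slin HZ hs hst)).
  - by move=> m' x; rewrite (sd HZ _ hs hst).
destruct (Rle_dec s r) as [h1|h0]; last by [].
have hl : Rlt r t by apply: Rnot_le_lt.
by rewrite (coef_pad0 _ _ (dimD_lt _ _ hl)) scale0r.
Qed.

Lemma gen_map (X Y : pch) (f : phom X Y) k s n (z : pobj X s n) :
  is_pch X -> is_pch Y -> is_phom f -> Rle R0 s -> forall r m u, Rle R0 r ->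
  f r m (@gen X k s n z r m u) = @gen Y k s n (f s n z) r m u.
Proof.
move=> HX HY [fl [fd fn]] hs r m u hr; rewrite /gen.
destruct (Rle_dec s r) as [h|h]; last by rewrite (lin0 (fl r m hr)).
rewrite (linZ (fl r m hr)) (fn s r m _ hs h); congr (_ *: _); congr (@pstr Y s r m _).
apply: (gw_map (phi := f s)).
- by move=> m' x y; rewrite (linD (fl s m' hs)).
- by move=> m'; rewrite (lin0 (fl s m' hs)).
- by move=> m' x; rewrite (fd s m' x hs).
Qed.

Lemma gen_ones (Z : pch) s n (z : pobj Z s n) :
  is_pch Z -> Rle R0 s -> @gen Z n.+1 s n z s n (ones _) = z.
Proof.
move=> HZ hs; rewrite /gen.
destruct (Rle_dec s s) as [h|h]; last by case: h; apply: Rle_refl.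
by rewrite (coef_ones1 (dimD_n n h)) scale1r (sid HZ _ hs) (gw_n HZ _ hs).
Qed.

Theorem mainTheorem5 (X Y : pch) (f : phom X Y) :
  is_pch X -> is_pch Y -> is_phom f ->
  ((forall (k : nat) (s t : R), (Rle R0 s) -> (Rlt s t) ->
       @RLP _ _ X Y (@diskIncl k t s) f)
   <->
   (forall (s t : R) (n : nat), (Rle R0 s) -> (Rle s t) ->
      forall (xt : pobj X t n) (ys : pobj Y s n),
        f t n xt = @pstr Y s t n ys ->
        exists xs : pobj X s n, @pstr X s t n xs = xt /\ f s n xs = ys)).
Proof.
move=> HX HY Hf; split.
- move=> RL s t n hs hst xt ys E.
  case: (Rle_lt_or_eq_dec s t hst) => [lt|eq]; last first.
    subst t; exists xt; split; first exact: (sid HX _ hs).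
    by rewrite E (sid HY _ hs).
  have ht := Rle_trans _ _ _ hs hst.
  have Ha : is_phom (@gen X n.+1 t n xt) := gen_phom xt HX ht.
  have Hb : is_phom (@gen Y n.+1 s n ys) := gen_phom ys HY hs.
  have Hc : pheq (Defs.pcomp f (@gen X n.+1 t n xt)) (Defs.pcomp (@gen Y n.+1 s n ys) (@diskIncl n.+1 t s)).
    move=> r m u hr; rewrite /Defs.pcomp (gen_map _ HX HY Hf ht) // E.
    by rewrite -(gen_restr _ HY hs hst).
  case: (RL n.+1 s t hs lt _ _ Ha Hb Hc) => h [Hh [H1 H2]].
  exists (h s n (ones _)); split.
    rewrite -(proj2 (proj2 Hh) s t n _ hs hst).
    have e1 : @pstr (diskD n.+1 s) s t n (ones _) = @diskIncl n.+1 t s t n (ones _).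
      rewrite /diskIncl /= (pad_ones (dimD_eq2 _ _ (Rle_refl s) hst)).
      by rewrite (pad_ones (dimD_eq _ _ (Rle_refl t) hst)).
    rewrite e1; have := H1 t n (ones _) ht; rewrite /Defs.pcomp => ->.
    exact: gen_ones.
  have := H2 s n (ones _) hs; rewrite /Defs.pcomp => ->.
  exact: gen_ones.
- move=> LF k s t hs hst a b Ha Hb H.
  have hstle := Rlt_le _ _ hst.
  have ht := Rle_trans _ _ _ hs hstle.
  case: k a b Ha Hb H => [|n] a b Ha Hb H.
    exists (fun r m _ => 0); split; [split; [|split]|split].
    + by move=> r m hr c u v; rewrite scaler0 addr0.
    + by move=> r m u hr; rewrite (lin0 (dlin HX hr)).
    + by move=> r r' m u hr hrr'; rewrite (lin0 (slin HX hr hrr')).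
    + move=> r m u hr; rewrite /Defs.pcomp (rv_d0 u (dimD0 _ _ _)).
      by rewrite (lin0 (proj1 Ha r m hr)).
    + move=> r m u hr; rewrite /Defs.pcomp (lin0 (proj1 Hf r m hr)) (rv_d0 u (dimD0 _ _ _)).
      by rewrite (lin0 (proj1 Hb r m hr)).
  set xt := a t n (ones _).
  set ys := b s n (ones _).
  have E : f t n xt = @pstr Y s t n ys.
    have := H t n (ones _) ht; rewrite /Defs.pcomp => ->.
    rewrite -(proj2 (proj2 Hb) s t n _ hs hstle); congr (b t n _).
    rewrite /diskIncl /= (pad_ones (dimD_eq2 _ _ (Rle_refl s) hstle)).
    by rewrite (pad_ones (dimD_eq _ _ (Rle_refl t) hstle)).
  case: (LF s t n hs hstle xt ys E) => xs [Hx1 Hx2].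
  exists (@gen X n.+1 s n xs); split; first exact: gen_phom.
  split.
  + move=> r m u hr; rewrite /Defs.pcomp (gen_restr _ HX hs hstle) // Hx1.
    symmetry; exact: (gen_uniq HX ht Ha).
  + move=> r m u hr; rewrite /Defs.pcomp (gen_map _ HX HY Hf hs) // Hx2.
    symmetry; exact: (gen_uniq HY hs Hb).
Qed.
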